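(* Let $R\ge1$, $\mathbf{x}$ a vector of pairwise distinct reals, $\mathbf{c}=(c_1,\dots,c_R)\in\mathbb{R}^R$, and let $\mathbf{u}\in\mathbb{C}^R$ be an eigenvector of $B(\mathbf{x},\mathbf{c})$. Then $$\Big|\sum_{r=1}^R c_ru_r\Big|^2=\sum_{r=1}^R|c_ru_r|^2.$$
   Context: $B(\mathbf{x},\mathbf{c})$ is the $R\times R$ matrix with entries $b_{m,m}=0$ and $b_{m,n}=\frac{c_mc_n}{x_m-x_n}$ for $m\ne n$. *)

(* Defs.v *)
(* Complex numbers are modelled by an arbitrary
   numClosedFieldType C (e.g. algC, or the complex numbers); "real" means
   membership in Num.real. *)
From HB Require Import structures.
From mathcomp Require Import all_boot all_order all_algebra.
Set Implicit Arguments. Unset Strict Implicit. Unset Printing Implicit Defensive.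
Import Order.TTheory GRing.Theory Num.Theory.
Local Open Scope ring_scope.

Definition Bmat (C : numClosedFieldType) (R : nat) (x c : 'I_R -> C) : 'M[C]_R :=
  \matrix_(m < R, n < R) (if m == n then 0 else c m * c n / (x m - x n)).

(* Main.v *)
Require Import Defs.
From HB Require Import structures.
From mathcomp Require Import all_boot all_order all_algebra.
From mathcomp Require Import ring.
Import Order.TTheory GRing.Theory Num.Theory.
Local Open Scope ring_scope.

Theorem lemma7 (C : numClosedFieldType) (R : nat) (hR : (0 < R)%N)
  (x c : 'I_R -> C)
  (hxr : forall r, x r \is Num.real) (hcr : forall r, c r \is Num.real)
  (hx : injective x)
  (u : 'cV[C]_R) (lam : C)
  (hu0 : u != 0) (hu : Bmat x c *m u = lam *: u) :
  `| \sum_(r < R) c r * u r ord0 | ^+ 2 = \sum_(r < R) `| c r * u r ord0 | ^+ 2.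
Proof.
have heig m : \sum_n Bmat x c m n * u n ord0 = lam * u m ord0.
  by have := congr1 (fun M : 'cV_R => M m ord0) hu; rewrite /= !mxE.
set v := fun r => u r ord0.
set b := fun m n => Bmat x c m n.
have hbE m n : b m n = if m == n then 0 else c m * c n / (x m - x n).
  by rewrite /b /Bmat mxE.
have hxne m n : m != n -> x m - x n != 0.
  by move=> hmn; rewrite subr_eq0 (inj_eq hx).
have hbr m n : b m n \is Num.real.
  rewrite hbE; case: eqP => _; first exact: rpred0.
  apply: rpredM; [apply: rpredM|rewrite rpredV; apply: rpredB]; by [].
have hbanti m n : b n m = - b m n.
  rewrite !hbE eq_sym; case: eqP => [_|/eqP hmn]; first by rewrite oppr0.
  rewrite -opprB invrN; ring.
have hbx m n : (x m - x n) * b m n = if m == n then 0 else c m * c n.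
  rewrite hbE; case: eqP => [_|/eqP hmn]; first by rewrite mulr0.
  by rewrite mulrC divfK //; exact: hxne.
pose Q (f g : 'I_R -> C) := \sum_m \sum_n (v m)^* * f m * b m n * g n * v n.
have hQ1 f : Q f (fun=>1) = lam * \sum_m f m * ((v m)^* * v m).
  rewrite /Q mulr_sumr; apply: eq_bigr => m _.
  transitivity ((v m)^* * f m * \sum_n b m n * v n).
    rewrite mulr_sumr; apply: eq_bigr => n _; ring.
  rewrite /b /v heig; ring.
have hQc f g : (forall r, f r \is Num.real) -> (forall r, g r \is Num.real) ->
    (Q f g)^* = - Q g f.
  move=> hf hg; rewrite /Q rmorph_sum /= exchange_big /= -sumrN.
  apply: eq_bigr => i _; rewrite rmorph_sum /= -sumrN; apply: eq_bigr => j _.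
  rewrite !rmorphM /= conjCK (conj_Creal (hf i)) (conj_Creal (hg j)).
  rewrite (conj_Creal (hbr i j)) hbanti; ring.
pose N := \sum_m (v m)^* * v m.
have hNr : N^* = N.
  by rewrite rmorph_sum; apply: eq_bigr => m _; rewrite rmorphM /= conjCK mulrC.
have hN0 : N != 0.
  apply/negP => /eqP hN; suff hz : u = 0 by rewrite hz eqxx in hu0.
  apply/matrixP => i j.
  rewrite (ord1 j) mxE.
  have hN' : \sum_m `|v m| ^+ 2 = 0.
    by rewrite -[X in _ = X]hN /N; apply: eq_bigr => m _; rewrite normCKC.
  have := psumr_eq0P (fun m _ => exprn_ge0 2 (normr_ge0 (v m))) hN' (i:=i) isT.
  by move/eqP; rewrite expf_eq0 /= normr_eq0 => /eqP.
have hlam : lam + lam^* = 0.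
  have h := hQc _ _ (fun _ => rpred1 _) (fun _ => rpred1 _).
  have hs : \sum_m 1 * ((v m)^* * v m) = N by apply: eq_bigr => m _; rewrite mul1r.
  rewrite hQ1 hs rmorphM /= hNr in h.
  have : (lam + lam^*) * N = 0 by rewrite mulrDl h subrr.
  by move/eqP; rewrite mulf_eq0 (negbTE hN0) orbF => /eqP.
pose X := \sum_m x m * ((v m)^* * v m).
have hXr : X^* = X.
  rewrite rmorph_sum; apply: eq_bigr => m _.
  by rewrite !rmorphM /= conjCK (conj_Creal (hxr m)) [_^* * _]mulrC.
have hdiff : Q x (fun=>1) - Q (fun=>1) x = 0.
  have h := hQc _ _ hxr (fun _ => rpred1 _).
  rewrite -[Q (fun=>1) x]opprK -h hQ1 rmorphM /= hXr opprK -mulrDl hlam mul0r.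
  by [].
have hdiff2 : Q x (fun=>1) - Q (fun=>1) x =
    \sum_m \sum_n (v m)^* * (if m == n then 0 else c m * c n) * v n.
  rewrite /Q -sumrB; apply: eq_bigr => m _; rewrite -sumrB; apply: eq_bigr => n _.
  rewrite -hbx; ring.
rewrite normCKC rmorph_sum mulr_suml.
transitivity (\sum_m \sum_n (v m)^* * (if m == n then 0 else c m * c n) * v n
   + \sum_m `|c m * v m| ^+ 2); last by rewrite -hdiff2 hdiff add0r.
rewrite -big_split; apply: eq_bigr => m _ /=.
rewrite mulr_sumr (bigD1 m) //= [X in _ = X + _](bigD1 m) //= eqxx mulr0 mul0r add0r.
rewrite normCKC addrC; congr (_ + _); apply: eq_bigr => n hn.
by rewrite eq_sym (negbTE hn) rmorphM /= (conj_Creal (hcr m)); rewrite /v [c m * _]mulrC -!mulrA.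
Qed.
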